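(* Let $\mathcal{C}'\subset\mathbb{P}^2$ be a reduced curve and $L\subset\mathbb{P}^2$ a line with equation $\alpha_L=0$ that is not contained in $\mathcal{C}'$; let $\mathcal{C}=\mathcal{C}'\cup L$ and $\mathcal{C}''=\mathcal{C}'\cap L$. Then there is an exact sequence of $S$-modules $$0\to D(\mathcal{C}')\xrightarrow{\ \cdot\alpha_L\ } D(\mathcal{C})\xrightarrow{\ \rho\ } D(\mathcal{C}''),$$ where the first map is multiplication by $\alpha_L$ and $\rho$ is defined by reducing modulo $\alpha_L$, i.e. $\rho(\theta)$ is the derivation of $\overline{S}=S/(\alpha_L)$ induced by $\theta$.
   Context: $S=\mathbb{C}[x,y,z]$. For a reduced curve $\mathcal{C}$ defined by a reduced homogeneous $f_{\mathcal{C}}\in S$, $D(\mathcal{C})=\{\theta\in\mathrm{Der}(S):\theta(f_{\mathcal{C}})\in Sf_{\mathcal{C}}\}$. Any $\theta\in D(\mathcal{C})$ satisfies $\theta(\alpha_L)\in(\alpha_L)$, hence induces a derivation of $\overline{S}=S/(\alpha_L)$ (a polynomial ring in two variables, the homogeneous coordinate ring of $L\cong\mathbb{P}^1$). The finite set of points $\mathcal{C}''\subset L$ is defined in $\overline{S}$ by the reduced polynomial $\bar g$, the product of linear forms of $\overline{S}$ vanishing at the distinct points of $\mathcal{C}''$, and $D(\mathcal{C}'')=\{\eta\in\mathrm{Der}(\overline{S}):\eta(\bar g)\in\bar g\,\overline{S}\}$. *)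

(* Defs.v *)
From HB Require Import structures.
From mathcomp Require Import all_boot all_order all_algebra.
From mathcomp Require Import Rstruct.
From mathcomp Require Import complex.
From mathcomp Require Import mpoly.
Set Implicit Arguments. Unset Strict Implicit. Unset Printing Implicit Defensive.
Import Order.TTheory GRing.Theory Num.Theory.
Local Open Scope ring_scope.

Notation CC := (complex Rdefinitions.R).

(* S = C[x,y,z] (variables 'X_0,'X_1,'X_2) and a polynomial ring in two
   variables (the model of S/(alpha_L), see parametrization below). *)
Notation S := {mpoly CC[3]}.
Notation S2 := {mpoly CC[2]}.

Definition is_derivation (n : nat) (D : {mpoly CC[n]} -> {mpoly CC[n]}) : Prop :=
  [/\ (forall p q, D (p + q) = D p + D q),
      (forall (c : CC) p, D (c *: p) = c *: D p) &
      (forall p q, D (p * q) = p * D q + q * D p)].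

Definition Dmod (n : nat) (f : {mpoly CC[n]}) (D : {mpoly CC[n]} -> {mpoly CC[n]}) : Prop :=
  is_derivation D /\ exists h, D f = h * f.

(* reduced homogeneous polynomial defining a curve of P^2:
   nonzero, homogeneous of degree >= 1, no square factor of positive degree *)
Definition reduced_curve (f : S) : Prop :=
  [/\ f != 0, (exists d, f \is d.-homog), (1 < msize f)%N &
      forall h q : S, f = h * h * q -> (msize h <= 1)%N].

Definition linear_form (n : nat) (a : {mpoly CC[n]}) : Prop :=
  a != 0 /\ a \is 1.-homog.

(* l = (l_0,l_1,l_2) linear forms in (u,v) giving an injective linear map
   C^2 -> C^3 into the plane {alpha = 0}: a linear parametrization of L.
   p |-> p \mPo l is then the surjection S -> S/(alpha_L) = C[u,v]. *)
Definition parametrizes (alpha : S) (l : 3.-tuple S2) : Prop :=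
  [/\ (forall i, tnth l i \is 1.-homog),
      alpha \mPo l = 0 &
      forall w : 'I_2 -> CC, (forall i, (tnth l i).@[w] = 0) -> forall j, w j = 0].

Definition pt (l : 3.-tuple S2) (w : 'I_2 -> CC) : 'I_3 -> CC :=
  fun i => (tnth l i).@[w].

(* gbar = reduced polynomial of the finite set C'' = C' cap L in L = P^1:
   product of pairwise non-proportional linear forms, whose zeros are exactly
   the points of L lying on C' = {f' = 0}. *)
Definition gbar_of (f' : S) (l : 3.-tuple S2) (g : S2) : Prop :=
  exists (k : nat) (ls : 'I_k -> S2),
    [/\ g = \prod_(i < k) ls i,
        (forall i, linear_form (ls i)),
        (forall i j, i != j -> forall c : CC, ls i != c *: ls j) &
        (forall w : 'I_2 -> CC, (exists j, w j != 0) ->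
           ((exists i, (ls i).@[w] = 0) <-> f'.@[pt l w] = 0))].

(* Main.v *)
Require Import Defs.
From HB Require Import structures.
From mathcomp Require Import all_boot all_order all_algebra.
From mathcomp Require Import Rstruct complex mpoly.
From mathcomp Require Import ring zify.
From Stdlib Require Import Classical FunctionalExtensionality.
Set Implicit Arguments. Unset Strict Implicit. Unset Printing Implicit Defensive.
Import Order.TTheory GRing.Theory Num.Theory.
Local Open Scope ring_scope.

Definition mdvd (n : nat) (a p : {mpoly CC[n]}) := exists q, p = a * q.

Section Gen.
Variable n : nat.
Implicit Types (a p q : {mpoly CC[n]}).

Lemma dvd0 a : mdvd a 0. Proof. by exists 0; rewrite mulr0. Qed.
Lemma dvdD a p q : mdvd a p -> mdvd a q -> mdvd a (p + q).
Proof. by move=> [x ->] [y ->]; exists (x + y); rewrite mulrDr. Qed.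
Lemma dvdMl a p q : mdvd a p -> mdvd a (q * p).
Proof. by move=> [x ->]; exists (q * x); rewrite mulrCA. Qed.
Lemma dvdMr a p q : mdvd a p -> mdvd a (p * q).
Proof. by move=> h; rewrite mulrC; apply: dvdMl. Qed.
Lemma dvdZ a c p : mdvd a p -> mdvd a (c *: p).
Proof. by move=> [x ->]; exists (c *: x); rewrite scalerAr. Qed.
Lemma dvdN a p : mdvd a p -> mdvd a (- p).
Proof. by move=> [x ->]; exists (- x); rewrite mulrN. Qed.
Lemma dvdB a p q : mdvd a p -> mdvd a q -> mdvd a (p - q).
Proof. by move=> hp hq; apply: dvdD => //; apply: dvdN. Qed.
Lemma dvdxx a : mdvd a a. Proof. by exists 1; rewrite mulr1. Qed.

Definition lin (c : 'I_n -> CC) : {mpoly CC[n]} := \sum_i c i *: 'X_i.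

Lemma lin_coef c j : (lin c)@_U_(j) = c j.
Proof.
rewrite /lin raddf_sum /= (bigD1 j) //= big1 => [|i /negbTE ne].
  by rewrite mcoeffZ mcoeffXU eqxx mulr1 addr0.
by rewrite mcoeffZ mcoeffXU ne mulr0.
Qed.

Lemma lin_ext c d : c =1 d -> lin c = lin d.
Proof. by move=> h; apply: eq_bigr => i _; rewrite h. Qed.

Lemma lin_inj c d : lin c = lin d -> c =1 d.
Proof. by move=> h j; rewrite -!lin_coef h. Qed.

Lemma linX i : 'X_i = lin (fun j => (i == j)%:R).
Proof.
rewrite /lin (bigD1 i) //= big1 => [|j /negbTE ne]; first by rewrite eqxx scale1r addr0.
by rewrite eq_sym ne scale0r.
Qed.

Lemma linZ x c : x *: lin c = lin (fun j => x * c j).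
Proof. by rewrite /lin scaler_sumr; apply: eq_bigr => i _; rewrite scalerA. Qed.

Lemma linD c d : lin c + lin d = lin (fun j => c j + d j).
Proof. by rewrite /lin -big_split; apply: eq_bigr => i _; rewrite scalerDl. Qed.

Lemma linB c d : lin c - lin d = lin (fun j => c j - d j).
Proof. by rewrite /lin -sumrB; apply: eq_bigr => i _; rewrite scalerBl. Qed.

Lemma lin_sum (I : finType) (x : I -> CC) (c : I -> 'I_n -> CC) :
  \sum_k x k *: lin (c k) = lin (fun j => \sum_k x k * c k j).
Proof.
rewrite /lin; under eq_bigr => k _ do rewrite scaler_sumr.
rewrite exchange_big /=; apply: eq_bigr => j _.
by rewrite scaler_suml; apply: eq_bigr => k _; rewrite scalerA.
Qed.

Lemma lin0 : lin (fun _ => 0) = 0.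
Proof. by rewrite /lin big1 // => i _; rewrite scale0r. Qed.

Lemma homog1_lin p : p \is 1.-homog -> p = lin (fun i => p@_U_(i)).
Proof.
move=> hp; apply/mpolyP => m; rewrite /lin raddf_sum /=.
have [/mdeg1P [j /eqP ->]|ne] := boolP (mdeg m == 1%N).
  rewrite (bigD1 j) //= big1 => [|i /negbTE ne].
    by rewrite mcoeffZ mcoeffXU eqxx mulr1 addr0.
  by rewrite mcoeffZ mcoeffXU ne mulr0.
rewrite (dhomog_nemf_coeff hp ne) big1 // => i _.
rewrite mcoeffZ mcoeffX; case: eqP => [e|]; last by rewrite mulr0.
by move: ne; rewrite -e mdeg1.
Qed.

Lemma comp_lin k c (t : n.-tuple {mpoly CC[k]}) :
  lin c \mPo t = \sum_i c i *: tnth t i.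
Proof.
rewrite /lin raddf_sum; apply: eq_bigr => i _ /=.
by rewrite linearZ /= comp_mpolyXU -tnth_nth.
Qed.

Lemma meval_lin c (w : 'I_n -> CC) : (lin c).@[w] = \sum_i c i * w i.
Proof.
rewrite /lin raddf_sum; apply: eq_bigr => i _ /=.
by rewrite mevalZ mevalXU.
Qed.

Lemma comp_cong a (t : n.-tuple {mpoly CC[n]}) :
  (forall i, mdvd a ('X_i - tnth t i)) -> forall p, mdvd a (p - (p \mPo t)).
Proof.
move=> H p.
have Hm : forall m, mdvd a ('X_[m] - ('X_[m] \mPo t)).
  move=> m; rewrite comp_mpolyX {1}mpolyXE_id.
  apply: (big_ind2 (fun x y => mdvd a (x - y))).
  - by rewrite subrr; apply: dvd0.
  - move=> x1 y1 x2 y2 h1 h2.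
    have -> : x1 * x2 - y1 * y2 = (x1 - y1) * x2 + y1 * (x2 - y2) by ring.
    by apply: dvdD; [apply: dvdMr | apply: dvdMl].
  - move=> i _; elim: (m i) => [|e IH]; first by rewrite !expr0 subrr; apply: dvd0.
    rewrite !exprS.
    have -> : 'X_i * 'X_i ^+ e - tnth t i * tnth t i ^+ e =
      ('X_i - tnth t i) * 'X_i ^+ e + tnth t i * ('X_i ^+ e - tnth t i ^+ e) by ring.
    by apply: dvdD; [apply: dvdMr | apply: dvdMl].
rewrite {1}(mpolyE p) comp_mpolyEX -sumrB; apply: big_ind.
- by apply: dvd0.
- by move=> x y; apply: dvdD.
- by move=> m _; rewrite -scalerBr; apply: dvdZ.
Qed.

Lemma comp_homog d (p : {mpoly CC[n]}) (z : 'I_n -> CC) k (j : 'I_k) :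
  p \is d.-homog -> p \mPo [tuple z i *: 'X_j | i < n] = p.@[z] *: 'X_j ^+ d.
Proof.
move=> hp; rewrite comp_mpolyEX mevalE scaler_suml; apply: eq_big_seq => m hm.
rewrite comp_mpolyX -scalerA; congr (_ *: _).
rewrite (eq_bigr (fun i => z i ^+ m i *: 'X_j ^+ m i)); last first.
  by move=> i _; rewrite tnth_mktuple exprZn.
by rewrite scaler_prod prodrXr -mdegE (dhomog_mf hp hm).
Qed.

End Gen.

Lemma comp_comp n k j (p : {mpoly CC[n]}) (t : n.-tuple {mpoly CC[k]})
  (s : k.-tuple {mpoly CC[j]}) :
  (p \mPo t) \mPo s = p \mPo [tuple tnth t i \mPo s | i < n].
Proof.
rewrite (comp_mpolyEX p t) (comp_mpolyEX p) raddf_sum /=; apply: eq_bigr => m _.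
rewrite comp_mpolyZ; congr (_ *: _).
rewrite !comp_mpolyX rmorph_prod /=; apply: eq_bigr => i _.
by rewrite rmorphXn /= tnth_mktuple.
Qed.

Lemma aux (R : comRingType) (x G h DG Dx C : R) e :
  x^+e.+1 * DG + G * (C * (x^+e * Dx)) = h * (x^+e.+1 * G) ->
  x^+e * (x * (h*G - DG)) = x^+e * (G * (C * Dx)).
Proof.
move=> H; apply/eqP; rewrite -subr_eq0; apply/eqP.
transitivity (h * (x^+e.+1 * G) - (x^+e.+1 * DG + G * (C * (x^+e * Dx)))); last by rewrite H subrr.
rewrite exprS; ring.
Qed.

Section Der.
Variable n : nat.
Variable D : {mpoly CC[n]} -> {mpoly CC[n]}.
Hypothesis hD : is_derivation D.
Implicit Types (a p q x : {mpoly CC[n]}).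

Lemma derD p q : D (p + q) = D p + D q. Proof. by case: hD => h _ _; apply: h. Qed.
Lemma derZ c p : D (c *: p) = c *: D p. Proof. case: hD => _ h _. exact (h c p). Qed.
Lemma derM p q : D (p * q) = p * D q + q * D p. Proof. by case: hD => _ _ h; apply: h. Qed.
Lemma der0 : D 0 = 0. Proof. by have := derZ 0 0; rewrite !scale0r. Qed.
Lemma derN p : D (- p) = - D p. Proof. by rewrite -scaleN1r derZ scaleN1r. Qed.
Lemma derB p q : D (p - q) = D p - D q. Proof. by rewrite derD derN. Qed.
Lemma der1 : D 1 = 0.
Proof.
have := derM 1 1; rewrite mulr1 mul1r => h.
by apply/eqP; rewrite -(addrI _ (esym (etrans (addr0 _) h))).
Qed.

Lemma derX p k : D (p ^+ k.+1) = (p ^+ k * D p) *+ k.+1.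
Proof.
elim: k => [|k IH]; first by rewrite expr1 expr0 mul1r.
rewrite exprS derM IH mulrnAr mulrA -exprS.
by rewrite [in RHS]mulrSr.
Qed.

Lemma der_mul_closed x y : (exists r, D x = r * x) -> (exists r, D y = r * y) ->
  exists r, D (x * y) = r * (x * y).
Proof.
move=> [r hr] [s hs]; exists (r + s); rewrite derM hr hs; ring.
Qed.

Lemma tangent (x F G h : {mpoly CC[n]}) (e : nat) :
  (forall p q, mdvd x (p * q) -> mdvd x p \/ mdvd x q) -> x != 0 ->
  F = x ^+ e.+1 * G -> ~ mdvd x G -> D F = h * F -> mdvd x (D x).
Proof.
move=> prime nx0 eF nG hF; rewrite eF derM derX in hF.
rewrite -scaler_nat -mul_mpolyC in hF.
have := aux hF.
move/(mulfI (expf_neq0 e nx0)) => E.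
have : mdvd x (x * (h * G - D G)) by apply: dvdMr; apply: dvdxx.
rewrite E.
case/prime => // [[q hq]].
rewrite mul_mpolyC in hq.
exists ((e.+1)%:R^-1 *: q); rewrite -scalerAr -hq scalerA mulVf ?scale1r //.
by rewrite pnatr_eq0.
Qed.

End Der.

Lemma mult_ex n (x F : {mpoly CC[n]}) : (1 < msize x)%N -> F != 0 -> mdvd x F ->
  exists e G, F = x ^+ e.+1 * G /\ ~ mdvd x G.
Proof.
move=> hx; have: (msize F <= msize F)%N by [].
move: {2}(msize F) => N; elim: N F => [|N IH] F hN nF [q hq].
  by move: nF; rewrite -msize_poly_eq0 -leqn0 hN.
have nq : q != 0 by apply: contraNneq nF => q0; rewrite hq q0 mulr0.
have nx : x != 0 by rewrite -msize_poly_eq0 -lt0n (ltn_trans _ hx).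
case: (classic (mdvd x q)) => [dq|ndq]; last by exists 0%N, q; rewrite expr1.
have hq' : (msize q <= N)%N.
  have hm := msizeM nx nq; rewrite -hq in hm.
  move: hN hx; rewrite hm; move: (msize x) (msize q) => a b.
  case: a => [|[|a]] //=; rewrite addSn /=; lia.
have [e [G [eG nG]]] := IH q hq' nq dq.
by exists e.+1, G; rewrite hq eG mulrA -exprS.
Qed.

Lemma sum2 (V : nmodType) (F : 'I_2 -> V) : \sum_i F i = F ord0 + F ord_max.
Proof. by rewrite big_ord_recl big_ord1; congr (_ + F _); apply: val_inj. Qed.

Lemma all2o (P : 'I_2 -> Prop) : P ord0 -> P ord_max -> forall i, P i.
Proof.
move=> h0 h1 [[|[|//]]] Hi.
  by have -> : Ordinal Hi = ord0 by apply: val_inj.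
by have -> : Ordinal Hi = ord_max by apply: val_inj.
Qed.

Lemma mdvd_lin n (ls : {mpoly CC[n]}) b c x :
  ls = lin b -> (forall k, c k = x * b k) -> mdvd ls (lin c).
Proof.
move=> -> h; exists (x *: 1); rewrite -scalerAr mulr1 linZ.
by apply: lin_ext => k; rewrite h.
Qed.

Lemma lin_nz n (p : {mpoly CC[n]}) : p != 0 -> p \is 1.-homog ->
  exists k, p@_U_(k) != 0.
Proof.
move=> nz hp; apply: NNPP => H.
have E : p = 0.
  rewrite (homog1_lin hp) (lin_ext (d := fun _ => 0)) ?lin0 // => k.
  by case: (eqVneq (p@_U_(k)) 0) => // ne; case: H; exists k.
by rewrite E eqxx in nz.
Qed.

Lemma msize_lin n (p : {mpoly CC[n]}) : p != 0 -> p \is 1.-homog -> (1 < msize p)%N.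
Proof.
move=> nz hp; have [k hk] := lin_nz nz hp.
have := @msize_mdeg_lt _ _ p U_(k); rewrite mdeg1; apply.
by rewrite mcoeff_msupp.
Qed.

Lemma K2 (ls : S2) : linear_form ls -> exists (z : 'I_2 -> CC) (j : 'I_2),
  [/\ z j = 1, ls.@[z] = 0 & forall i, mdvd ls ('X_i - z i *: 'X_j)].
Proof.
move=> [nz hom]; set b := fun i => ls@_U_(i).
have hls : ls = lin b by apply: homog1_lin.
have hX : forall (i j : 'I_2) (c : CC), 'X_i - c *: 'X_j =
    lin (fun k => (i == k)%:R - c * (j == k)%:R).
  by move=> i j c; rewrite (linX i) (linX j) linZ linB.
have [b0|b0] := eqVneq (b ord0) 0.
  have b1 : b ord_max != 0.
    apply: contraNneq nz => b1; rewrite hls (lin_ext (d := fun _ => 0)) ?lin0 //.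
    by apply: all2o.
  exists (fun i => (i == ord0)%:R), ord0; split => //.
  - by rewrite hls meval_lin sum2 b0 /= !mul0r mulr0 addr0.
  - apply: all2o; rewrite hX.
    + by apply: (mdvd_lin (x := 0) hls); apply: all2o; rewrite /= ?mul1r ?subrr ?mul0r.
    + apply: (mdvd_lin (x := (b ord_max)^-1) hls); apply: all2o.
        by rewrite /= b0 mulr0 mul0r subrr.
      by rewrite /= mul0r subr0 mulVf.
exists (fun i => if i == ord0 then - (b ord_max / b ord0) else 1), ord_max; split => //.
- rewrite hls meval_lin sum2 /= mulr1; field; exact b0.
- apply: all2o; rewrite hX.
  + apply: (mdvd_lin (x := (b ord0)^-1) hls); apply: all2o.
      by rewrite /= mulr0 subr0 mulVf.
    by rewrite /= mulr1 opprK add0r mulrC.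
  + by apply: (mdvd_lin (x := 0) hls); apply: all2o; rewrite /= ?mul1r ?subrr ?mul0r ?mulr0 ?subr0.
Qed.

Definition i0 : 'I_3 := @Ordinal 3 0 isT.
Definition i1 : 'I_3 := @Ordinal 3 1 isT.
Definition i2 : 'I_3 := @Ordinal 3 2 isT.

Lemma sum3 (V : nmodType) (F : 'I_3 -> V) : \sum_i F i = F i0 + F i1 + F i2.
Proof.
rewrite !big_ord_recl big_ord0 addr0 addrA; congr (F _ + F _ + F _); exact: val_inj.
Qed.

Lemma all3 (P : 'I_3 -> Prop) : P i0 -> P i1 -> P i2 -> forall i, P i.
Proof.
move=> h0 h1 h2 [[|[|[|//]]] Hi].
- by have -> : Ordinal Hi = i0 by apply: val_inj.
- by have -> : Ordinal Hi = i1 by apply: val_inj.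
- by have -> : Ordinal Hi = i2 by apply: val_inj.
Qed.

Definition vec3 (x y z : CC) : 'I_3 -> CC :=
  fun i => if val i == 0%N then x else if val i == 1%N then y else z.

Definition cross (u v : 'I_3 -> CC) : 'I_3 -> CC :=
  vec3 (u i1 * v i2 - u i2 * v i1) (u i2 * v i0 - u i0 * v i2) (u i0 * v i1 - u i1 * v i0).

Ltac s3 F H :=
  first [ ring
  | (transitivity (F i0); [rewrite /cross /vec3 /=; ring | exact: H])
  | (transitivity (F i1); [rewrite /cross /vec3 /=; ring | exact: H])
  | (transitivity (F i2); [rewrite /cross /vec3 /=; ring | exact: H])
  | (transitivity (- F i0); [rewrite /cross /vec3 /=; ring | by rewrite H oppr0])
  | (transitivity (- F i1); [rewrite /cross /vec3 /=; ring | by rewrite H oppr0])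
  | (transitivity (- F i2); [rewrite /cross /vec3 /=; ring | by rewrite H oppr0]) ].

Definition dot (u v : 'I_3 -> CC) := u i0 * v i0 + u i1 * v i1 + u i2 * v i2.

Lemma K3alg (P Q a : 'I_3 -> CC) k k' :
  dot a P = 0 -> dot a Q = 0 -> cross P Q k != 0 -> a k' != 0 ->
  exists (c0 c1 x : 'I_3 -> CC),
   [/\ dot c0 P = 1, dot c0 Q = 0, dot c1 P = 0, dot c1 Q = 1 &
       forall i j, (i == j)%:R - (P i * c0 j + Q i * c1 j) = x i * a j].
Proof.
move=> EP EQ nk nk'.
have hA : forall c, cross a (cross P Q) c = 0.
  move=> c; transitivity (P c * dot a Q - Q c * dot a P); last by rewrite EP EQ !mulr0 subrr.
  by move: c; apply: all3; rewrite /cross /vec3 /dot /=; ring.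
have hpar : forall k' j, a k' * cross P Q j = a j * cross P Q k'.
  move=> k0 j; apply/eqP; rewrite -subr_eq0; apply/eqP; move: k0 j.
  by apply: all3; apply: all3; s3 (cross a (cross P Q)) hA.
pose e : 'I_3 -> CC := fun i => (i == k)%:R.
have eD : dot e (cross P Q) = cross P Q k.
  by rewrite /dot /e; move: (k) => k0; move: k0; apply: all3; rewrite /=; ring.
set D := dot e (cross P Q).
have nD : D != 0 by rewrite /D eD.
exists (fun i => cross Q e i / D), (fun i => cross e P i / D),
  (fun i => e i * cross P Q k' / (D * a k')); split.
- rewrite /dot; transitivity (dot (cross Q e) P / D).
    by rewrite /dot; field; exact: nD.
  rewrite /D /dot -[in RHS](divff nD) /D /dot; congr (_ / _).
  by rewrite /cross /vec3 /=; ring.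
- transitivity (dot (cross Q e) Q / D); first by rewrite /dot; field; exact: nD.
  by rewrite /cross /vec3 /dot /=; field; exact: nD.
- transitivity (dot (cross e P) P / D); first by rewrite /dot; field; exact: nD.
  by rewrite /cross /vec3 /dot /=; field; exact: nD.
- rewrite /dot; transitivity (dot (cross e P) Q / D).
    by rewrite /dot; field; exact: nD.
  rewrite /D /dot -[in RHS](divff nD) /D /dot; congr (_ / _).
  by rewrite /cross /vec3 /=; ring.
- move=> i j.
  have big : D * (i == j)%:R - P i * cross Q e j - Q i * cross e P j = e i * cross P Q j.
    rewrite /D; move: i j; apply: all3; apply: all3; rewrite /cross /vec3 /dot /=; ring.
  have hj : cross P Q j = a j * cross P Q k' / a k'.
    by rewrite -hpar; field.
  transitivity ((D * (i == j)%:R - P i * cross Q e j - Q i * cross e P j) / D).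
    by field; exact: nD.
  rewrite big hj; field; apply/andP; split => //.
Qed.

Lemma K3 (alpha : S) (l : 3.-tuple S2) : linear_form alpha -> parametrizes alpha l ->
  exists m : 2.-tuple S, (forall j, tnth m j \mPo l = 'X_j) /\
                         (forall i, mdvd alpha ('X_i - (tnth l i \mPo m))).
Proof.
move=> [nza homa] [homl al inj].
set a := fun i => alpha@_U_(i).
have ha : alpha = lin a by apply: homog1_lin.
set LC := fun i j => (tnth l i)@_U_(j).
have hl : forall i, tnth l i = lin (LC i) by move=> i; apply: homog1_lin.
set P := fun i => LC i ord0.
set Q := fun i => LC i ord_max.
have hsum : lin (fun j => \sum_i a i * LC i j) = lin (fun _ => 0).
  have E : alpha \mPo l = \sum_k a k *: lin (LC k).
    by rewrite {1}ha comp_lin; apply: eq_bigr => i _; rewrite hl.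
  by rewrite lin_sum al in E; rewrite lin0 -E.
have EP : \sum_i a i * P i = 0 by have := lin_inj hsum ord0.
have EQ : \sum_i a i * Q i = 0 by have := lin_inj hsum ord_max.
rewrite sum3 in EP; rewrite sum3 in EQ.
have injw : forall w : 'I_2 -> CC, (forall i, P i * w ord0 + Q i * w ord_max = 0) ->
    w ord0 = 0 /\ w ord_max = 0.
  move=> w hw; have := inj w; rewrite /pt => h; split; apply: h => i;
  by rewrite hl meval_lin sum2 hw.
have [k nk] : exists k, cross P Q k != 0.
  apply: NNPP => H.
  have hN : forall k, cross P Q k = 0.
    by move=> k; case: (eqVneq (cross P Q k) 0) => // ne; case: H; exists k.
  have PQ0 : forall i, P i = 0 /\ Q i = 0.
    move=> i; have := injw (fun j => if val j == 0%N then Q i else - P i); rewrite /=.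
    case => [|-> /eqP]; last by rewrite oppr_eq0 => /eqP.
    move=> i'; rewrite mulrN; move: i i'.
    by apply: all3; apply: all3; s3 (cross P Q) hN.
  have := injw (fun j => if val j == 0%N then 1 else 0); rewrite /=.
  case => [|/eqP]; last by rewrite oner_eq0.
  by move=> i; have [-> ->] := PQ0 i; rewrite !mul0r addr0.
have [k' nk'] : exists k', a k' != 0 by apply: lin_nz.
have EP' : dot a P = 0 by exact: EP.
have EQ' : dot a Q = 0 by exact: EQ.
have [c0 [c1 [x [h0P h0Q h1P h1Q hx]]]] := K3alg EP' EQ' nk nk'.
exists [tuple lin c0; lin c1]; split.
- apply: all2o => /=.
  + rewrite comp_lin (eq_bigr (fun i => c0 i *: lin (LC i))); last by move=> i _; rewrite hl.
    rewrite lin_sum (linX ord0); apply: lin_ext; apply: all2o; rewrite /= sum3; [exact: h0P|exact: h0Q].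
  + rewrite comp_lin (eq_bigr (fun i => c1 i *: lin (LC i))); last by move=> i _; rewrite hl.
    rewrite lin_sum (linX ord_max); apply: lin_ext; apply: all2o; rewrite /= sum3; [exact: h1P|exact: h1Q].
- move=> i; rewrite hl comp_lin sum2 /= !linZ linD (linX i) linB.
  by apply: (mdvd_lin (x := x i) ha) => j; exact: hx.
Qed.

Section Aux.
Variable R : comRingType.
Lemma auxA (f a h ta tf : R) : f * ta + a * tf = h * (f * a) -> f * ta = a * (h * f - tf).
Proof. move=> H; apply/eqP; rewrite -subr_eq0; apply/eqP.
transitivity (f * ta + a * tf - h * (f * a)); last by rewrite H subrr. ring. Qed.
Lemma auxB (f a h ta tf k : R) : f * ta + a * tf = h * (f * a) -> ta = a * k ->
  a * tf = a * ((h - k) * f).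
Proof. move=> H hk; rewrite hk in H; apply/eqP; rewrite -subr_eq0; apply/eqP.
transitivity (f * (a * k) + a * tf - h * (f * a)); last by rewrite H subrr. ring. Qed.
Lemma auxC (f a h ta : R) : a * (f * ta + a * (h * f)) = (ta + a * h) * (f * a).
Proof. ring. Qed.
Lemma auxD (f a h : R) : h * (f * a) = a * (h * f).
Proof. ring. Qed.
Lemma auxE (f a h ta tf : R) : f * ta + a * tf = h * f -> f * (h - ta) = a * tf.
Proof. move=> H; apply/eqP; rewrite -subr_eq0; apply/eqP.
transitivity (h * f - (f * ta + a * tf)); last by rewrite H subrr. ring. Qed.
Lemma auxF (f a s tf : R) : f * (a * s) = a * tf -> a * tf = a * (s * f).
Proof. move=> <-; ring. Qed.
Lemma auxG (a p q x y : R) : p * (a * x) + q * (a * y) = a * (p * x + q * y).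
Proof. ring. Qed.
End Aux.

Lemma compM n k (t : n.-tuple {mpoly CC[k]}) (x y : {mpoly CC[n]}) :
  (x * y) \mPo t = (x \mPo t) * (y \mPo t).
Proof. exact: (fst (comp_mpoly_is_multiplicative t) x y). Qed.

Lemma eta_der_gen n k (th : {mpoly CC[n]} -> {mpoly CC[n]})
  (l : n.-tuple {mpoly CC[k]}) (m : k.-tuple {mpoly CC[n]}) :
  is_derivation th -> (forall q, (q \mPo m) \mPo l = q) ->
  is_derivation (fun q => th (q \mPo m) \mPo l).
Proof.
move=> hD hs; split.
- by move=> p q; rewrite comp_mpolyD (derD hD) comp_mpolyD.
- by move=> c p; rewrite comp_mpolyZ (derZ hD) comp_mpolyZ.
- move=> p q /=; rewrite compM (derM hD) comp_mpolyD.
  congr (_ + _).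
    transitivity (((p \mPo m) \mPo l) * (th (q \mPo m) \mPo l)); first exact: compM.
    by congr (_ * _); exact: hs.
  transitivity (((q \mPo m) \mPo l) * (th (p \mPo m) \mPo l)); first exact: compM.
  by congr (_ * _); exact: hs.
Qed.

Section Main.
Variables (f' alpha : S) (l : 3.-tuple S2) (m : 2.-tuple S).
Hypothesis nza : alpha != 0.
Hypothesis hal : alpha \mPo l = 0.
Hypothesis hnd : ~ (exists q : S, f' = alpha * q).
Hypothesis hm1 : forall j, tnth m j \mPo l = 'X_j.
Hypothesis hm2 : forall i, mdvd alpha ('X_i - (tnth l i \mPo m)).

Lemma surj (q : S2) : (q \mPo m) \mPo l = q.
Proof.
rewrite comp_comp.
have -> : [tuple tnth m i \mPo l | i < 2] = [tuple 'X_i | i < 2].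
  by apply: eq_from_tnth => j; rewrite !tnth_mktuple hm1.
exact: comp_mpoly_id.
Qed.

Lemma cong3 (p : S) : mdvd alpha (p - ((p \mPo l) \mPo m)).
Proof.
rewrite comp_comp; apply: comp_cong => i.
by rewrite tnth_mktuple; apply: hm2.
Qed.

Lemma ker (p : S) : p \mPo l = 0 -> mdvd alpha p.
Proof. by move=> h; have := cong3 p; rewrite h comp_mpoly0 subr0. Qed.

Lemma kerR (p : S) : mdvd alpha p -> p \mPo l = 0.
Proof. by move=> [q ->]; rewrite compM hal mul0r. Qed.

Lemma congl (p q : S) : mdvd alpha (p - q) -> p \mPo l = q \mPo l.
Proof. by move/kerR; rewrite comp_mpolyB => /eqP; rewrite subr_eq0 => /eqP. Qed.

Lemma prime3 (p q : S) : mdvd alpha (p * q) -> mdvd alpha p \/ mdvd alpha q.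
Proof.
move/kerR; rewrite compM => /eqP; rewrite mulf_eq0 => /orP [/eqP h|/eqP h].
  by left; apply: ker.
by right; apply: ker.
Qed.

Section Th.
Variable th : S -> S.
Hypothesis hth : Dmod (f' * alpha) th.

Lemma thal : mdvd alpha (th alpha).
Proof.
case: hth => hD [h hh]; rewrite (derM hD) in hh.
have : mdvd alpha (f' * th alpha).
  by exists (h * f' - th f'); apply: auxA.
by case/prime3 => // hf; case: hnd.
Qed.

Lemma thf : exists r, th f' = r * f'.
Proof.
case: hth => hD [h hh]; rewrite (derM hD) in hh.
have [k hk] := thal.
by exists (h - k); apply: (mulfI nza); apply: auxB hh hk.
Qed.

Lemma th_cong (p q : S) : mdvd alpha (p - q) -> mdvd alpha (th p - th q).
Proof.
case: hth => hD _ [r hr].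
rewrite -(derB hD) hr (derM hD); apply: dvdD; first by apply: dvdMr; apply: dvdxx.
by apply: dvdMl; apply: thal.
Qed.

Definition eta (q : S2) : S2 := th (q \mPo m) \mPo l.

Lemma eta_rel p : eta (p \mPo l) = th p \mPo l.
Proof.
rewrite /eta; apply: congl; rewrite -opprB; apply: dvdN; apply: th_cong.
exact: cong3.
Qed.

Lemma eta_der : is_derivation eta.
Proof. by case: hth => hD _; apply: eta_der_gen => //; exact: surj. Qed.

Lemma eta_g (d : nat) (g : S2) : f' \is d.-homog ->
  (forall i, tnth l i \is 1.-homog) -> gbar_of f' l g ->
  exists h, eta g = h * g.
Proof.
move=> hd homl [k [ls [-> hlin _ hzero]]].
have hD := eta_der.
have [r hr] := thf.
pose F := f' \mPo l.
have nF : F != 0.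
  apply/negP => /eqP F0; apply: hnd; have [q hq] := ker F0; by exists q.
have hF : eta F = (r \mPo l) * F by rewrite /F eta_rel hr compM.
have each : forall i, exists s, eta (ls i) = s * ls i.
  move=> i; have [z [j [zj lsz hdv]]] := K2 (hlin i).
  pose t := [tuple z u *: 'X_j | u < 2].
  have kerT : forall p, p \mPo t = 0 -> mdvd (ls i) p.
    move=> p hp; have := @comp_cong _ (ls i) t _ p.
    rewrite hp subr0; apply => u; rewrite tnth_mktuple; exact: hdv.
  have lsT : ls i \mPo t = 0.
    by rewrite /t (comp_homog z j (hlin i).2) lsz scale0r.
  have prime2 : forall p q, mdvd (ls i) (p * q) -> mdvd (ls i) p \/ mdvd (ls i) q.
    move=> p q [s hs].
    have : (p * q) \mPo t = 0 by rewrite hs compM lsT mul0r.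
    rewrite compM => /eqP; rewrite mulf_eq0 => /orP [/eqP h|/eqP h].
      by left; apply: kerT.
    by right; apply: kerT.
  have FT : F \mPo t = 0.
    rewrite /F comp_comp.
    have -> : [tuple tnth l u \mPo t | u < 3] = [tuple (pt l z u) *: 'X_j | u < 3].
      apply: eq_from_tnth => u; rewrite !tnth_mktuple /t (comp_homog z j (homl u)) expr1 //.
    rewrite (comp_homog (pt l z) j hd).
    have -> : f'.@[pt l z] = 0.
      apply: (hzero z _).1; first by exists j; rewrite zj oner_neq0.
      by exists i.
    by rewrite scale0r.
  have dF := kerT _ FT.
  have [e [G [eG nG]]] := mult_ex (msize_lin (hlin i).1 (hlin i).2) nF dF.
  have [s hs] := tangent hD prime2 (hlin i).1 eG nG hF.
  by exists s; rewrite hs mulrC.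
apply: (big_ind (fun x => exists h, eta x = h * x)).
- by exists 0; rewrite (der1 hD) mul0r.
- by move=> x y; apply: der_mul_closed.
- by move=> i _; apply: each.
Qed.

End Th.
End Main.

Theorem proposition2p10 (f' alpha : S) (l : 3.-tuple S2) (g : S2) :
  reduced_curve f' ->
  linear_form alpha ->
  ~ (exists q : S, f' = alpha * q) ->
  parametrizes alpha l ->
  gbar_of f' l g ->
  (* D(C') --(. alpha)--> D(C) is well defined and injective *)
  (forall th, Dmod f' th -> Dmod (f' * alpha) (fun p => alpha * th p)) /\
  (forall th, Dmod f' th -> (fun p => alpha * th p) = (fun _ => 0) ->
              th = (fun _ => 0)) /\
  (* rho : D(C) -> D(C'') is well defined *)
  (forall th, Dmod (f' * alpha) th ->
     exists eta, Dmod g eta /\ forall p, eta (p \mPo l) = th p \mPo l) /\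
  (* exactness at D(C): ker rho = alpha . D(C') *)
  (forall th eta, Dmod (f' * alpha) th ->
     (forall p, eta (p \mPo l) = th p \mPo l) ->
     (eta = (fun _ => 0) <->
        exists th', Dmod f' th' /\ th = (fun p => alpha * th' p))).
Proof.
move=> [nzf [d hd] _ _] ha hnd hpar hg.
have nza := ha.1.
have [m [hm1 hm2]] := K3 ha hpar.
case: hpar => homl hal _.
split; [|split; [|split]].
- move=> th [hD [h hh]]; split.
    split.
    + by move=> p q; rewrite (derD hD) mulrDr.
    + by move=> c p; rewrite (derZ hD) scalerAr.
    + by move=> p q; rewrite (derM hD) auxG.
  exists (th alpha + alpha * h).
  by rewrite (derM hD) hh auxC.
- move=> th _ E; apply: functional_extensionality => p.
  have := congr1 (fun F => F p) E => /= /eqP.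
  by rewrite mulf_eq0 (negbTE nza) => /eqP.
- move=> th hth; exists (eta l m th); split; last exact: (eta_rel hal hnd hm2 hth).
  split; first exact: (eta_der hm1 hth).
  exact: (eta_g nza hal hnd hm1 hm2 hth hd homl hg).
- move=> th eta' hth hrel; split.
  + move=> E.
    have hdv : forall p, mdvd alpha (th p).
      by move=> p; apply: (ker hm2); rewrite -hrel E.
    have ex : forall p, exists q, th p == alpha * q.
      by move=> p; have [q hq] := hdv p; exists q; apply/eqP.
    pose th' := fun p => xchoose (ex p).
    have hth' : forall p, th p = alpha * th' p.
      by move=> p; apply/eqP; exact: (xchooseP (ex p)).
    exists th'; split; last by apply: functional_extensionality.
    case: hth => hD [h hh].
    have hD' : is_derivation th'.
      split.
      * by move=> p q; apply: (mulfI nza); rewrite mulrDr -!hth' (derD hD).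
      * by move=> c p; apply: (mulfI nza); rewrite -scalerAr -!hth' (derZ hD).
      * move=> p q; apply: (mulfI nza); rewrite -hth' (derM hD) !hth'.
        by rewrite auxG.
    split => //.
    have h1 : th' (f' * alpha) = h * f'.
      by apply: (mulfI nza); rewrite -hth' hh auxD.
    rewrite (derM hD') in h1.
    have : mdvd alpha (f' * (h - th' alpha)) by exists (th' f'); apply: auxE.
    case/(prime3 hal hm2) => [hf|[s hs]]; first by case: hnd.
    exists s; apply: (mulfI nza); apply: auxF.
    by rewrite -hs; apply: auxE.
  + move=> [th' [_ eth]]; apply: functional_extensionality => q.
    rewrite -(surj hm1 q) hrel eth compM hal mul0r.
    by [].
Qed.
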